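(* Let $G$ be a looped simple graph and $M$ a transverse matroid of $G$. Then every matroid minor of $M$ is isomorphic to a transverse matroid of some vertex-minor of $G$.
   Context: A looped simple graph is a finite graph in which each vertex carries at most one loop and no two distinct vertices are joined by more than one edge; ''neighbors'' are distinct vertices joined by a non-loop edge. $A(G)$ is the $V(G)\times V(G)$ matrix over $GF(2)$ with diagonal entry $1$ exactly at looped vertices and off-diagonal entry $1$ exactly for adjacent pairs. $IAS(G)=(I\mid A(G)\mid A(G)+I)$ over $GF(2)$, rows indexed by $V(G)$; the $v$-columns of the three blocks are labelled $\phi_G(v),\chi_G(v),\psi_G(v)$. $M[IAS(G)]$ is the binary column matroid of $IAS(G)$ on $W(G)=\{\phi_G(v),\chi_G(v),\psi_G(v):v\in V(G)\}$. A transversal contains exactly one element of each vertex triple $\{\phi_G(v),\chi_G(v),\psi_G(v)\}$; a transverse matroid of $G$ is the restriction of $M[IAS(G)]$ to a transversal. $G_\ell^v$ complements the loop status of $v$; $G_s^v$ complements the adjacency status of every pair of distinct neighbors of $v$; $G_{ns}^v$ does this and also complements the loop status of every neighbor of $v$. A vertex-minor of $G$ is a graph obtained from $G$ by a finite sequence of these operations and vertex deletions. *)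

(* Defs.v *)
From HB Require Import structures.
From mathcomp Require Import all_boot all_algebra.
Set Implicit Arguments. Unset Strict Implicit. Unset Printing Implicit Defensive.
Import GRing.Theory.
Local Open Scope ring_scope.

(** * Looped simple graphs, over an ambient finite type [V].
    The vertex set is [verts G]; [loops G v] says v carries a loop;
    [adj G v w] says v, w are joined by a (non-loop) edge. *)
Record lgraph (V : finType) := LGraph {
  verts : {set V};
  loops : V -> bool;
  adj : V -> V -> bool }.

Definition lgraph_wf (V : finType) (G : lgraph V) : Prop :=
  (forall v, loops G v -> v \in verts G) /\
  (forall v w, adj G v w -> (v \in verts G) && (w \in verts G)) /\
  (forall v w, adj G v w = adj G w v) /\
  (forall v, adj G v v = false).

Definition nbr (V : finType) (G : lgraph V) (v w : V) : bool := (v != w) && adj G v w.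

Definition op_l (V : finType) (G : lgraph V) (v : V) : lgraph V :=
  LGraph (verts G) (fun w => loops G w (+) (w == v)) (adj G).

Definition op_s (V : finType) (G : lgraph V) (v : V) : lgraph V :=
  LGraph (verts G) (loops G)
    (fun w x => adj G w x (+) [&& w != x, nbr G v w & nbr G v x]).

Definition op_ns (V : finType) (G : lgraph V) (v : V) : lgraph V :=
  LGraph (verts G) (fun w => loops G w (+) nbr G v w)
    (fun w x => adj G w x (+) [&& w != x, nbr G v w & nbr G v x]).

Definition op_del (V : finType) (G : lgraph V) (v : V) : lgraph V :=
  LGraph (verts G :\ v) (fun w => loops G w && (w != v))
    (fun w x => [&& adj G w x, w != v & x != v]).

Definition vm_step (V : finType) (G H : lgraph V) : Prop :=
  exists2 v, v \in verts G &
    [\/ H = op_l G v, H = op_s G v, H = op_ns G v | H = op_del G v].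

Inductive vertex_minor (V : finType) (G : lgraph V) : lgraph V -> Prop :=
| vm_refl : vertex_minor G G
| vm_trans H K : vertex_minor G H -> vm_step H K -> vertex_minor G K.

Definition AG (V : finType) (G : lgraph V) (w v : V) : 'F_2 :=
  ([&& w \in verts G, v \in verts G &
      if w == v then loops G v else adj G w v] : nat)%:R.

(** elements of W(G): (v, 0) = phi_G(v), (v, 1) = chi_G(v), (v, 2) = psi_G(v).
    The column of IAS(G) labelled by x, evaluated at row w. *)
Definition ias_col (V : finType) (G : lgraph V) (x : V * 'I_3) (w : V) : 'F_2 :=
  let: (v, k) := x in
  let e := ((w == v) : nat)%:R in
  match val k with
  | 0 => e
  | 1 => AG G w v
  | _ => AG G w v + e
  end.

Definition ias_rank (V : finType) (G : lgraph V) (S : {set V * 'I_3}) : nat :=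
  \rank (\matrix_(i < #|S|, j < #|V|) ias_col G (enum_val i) (enum_val j)).

Definition WG (V : finType) (G : lgraph V) : {set V * 'I_3} :=
  [set x | x.1 \in verts G].

Definition gtransversal (V : finType) (G : lgraph V) (T : {set V * 'I_3}) : Prop :=
  T \subset WG G /\
  forall v, v \in verts G -> #|[set k : 'I_3 | (v, k) \in T]| = 1%N.

Record matroid (X : finType) := Matroid {
  mground : {set X};
  mrank : {set X} -> nat }.

Definition tmatroid (V : finType) (G : lgraph V) (T : {set V * 'I_3}) :=
  Matroid T (ias_rank G).

Definition mminor (X : finType) (M : matroid X) (C D : {set X}) : matroid X :=
  Matroid (mground M :\: (C :|: D)) (fun S => (mrank M (S :|: C) - mrank M C)%N).

Definition miso (X Y : finType) (M : matroid X) (N : matroid Y) : Prop :=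
  exists f : X -> Y,
    {in mground M &, injective f} /\ f @: mground M = mground N /\
    forall S : {set X}, S \subset mground M -> mrank N (f @: S) = mrank M S.

(* Main.v *)
Require Import Defs.
From mathcomp Require Import all_boot all_algebra.
From mathcomp Require Import ring zify.
Set Implicit Arguments. Unset Strict Implicit. Unset Printing Implicit Defensive.
Import GRing.Theory.
Local Open Scope ring_scope.

Section LA.
Variables (F : fieldType) (X : finType) (n : nat).
Implicit Types (f g : X -> 'rV[F]_n) (S A B : {set X}).

Definition rk f S := \rank (\sum_(x in S) <<f x>>)%MS.

Lemma sumsU f A B :
  (\sum_(x in A :|: B) <<f x>> :=: \sum_(x in A) <<f x>> + \sum_(x in B) <<f x>>)%MS.
Proof.
apply/eqmxP/andP; split.
  apply/sumsmx_subP => x; rewrite inE => /orP[xA|xB].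
    by apply: submx_trans (addsmxSl _ _); apply: (sumsmx_sup x).
  by apply: submx_trans (addsmxSr _ _); apply: (sumsmx_sup x).
rewrite addsmx_sub; apply/andP; split; apply/sumsmx_subP => x xS;
  by apply: (sumsmx_sup x) => //; rewrite inE xS ?orbT.
Qed.

Lemma sums_mono f A B : A \subset B ->
  (\sum_(x in A) <<f x>> <= \sum_(x in B) <<f x>>)%MS.
Proof.
move=> sAB; apply/sumsmx_subP => x xA.
by apply: (sumsmx_sup x) => //; apply: (subsetP sAB).
Qed.

Lemma rk_mono f A B : A \subset B -> (rk f A <= rk f B)%N.
Proof. by move=> sAB; apply: mxrankS; apply: sums_mono. Qed.

Lemma rk_set0 f : rk f set0 = 0%N.
Proof. by rewrite /rk big_set0 mxrank0. Qed.

Lemma rk_set1 f x : rk f [set x] = (f x != 0).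
Proof. by rewrite /rk big_set1 genmxE rank_rV. Qed.

Lemma rk_transport f g (s : X -> X) (P : 'M[F]_n) S :
  P \in unitmx -> injective s -> (forall x, g (s x) = f x *m P) ->
  rk g (s @: S) = rk f S.
Proof.
move=> uP inj_s fg; rewrite /rk big_imset; last by move=> x y _ _; apply: inj_s.
rewrite (eq_bigr (fun x => <<f x *m P>>%MS)); last by move=> x _; rewrite fg.
have E : ((\sum_(x in S) <<f x>>)%MS *m P :=: \sum_(x in S) <<f x *m P>>)%MS.
  refine (eqmx_trans (sumsmxMr _ _ _) _); apply: eqmx_sums => x _.
  refine (eqmx_trans (eqmxMr _ (genmxE _)) _). apply: eqmx_sym; apply: genmxE.
rewrite -E.1 mxrankMfree //.
by rewrite row_free_unit.
Qed.

Lemma rk_U1 f S y :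
  rk f (S :|: [set y]) = \rank (\sum_(x in S) <<f x>> + f y)%MS.
Proof.
rewrite /rk (sumsU _ _ _).1 big_set1.
exact: (adds_eqmx (eqmx_refl _) (genmxE _)).1.
Qed.

Lemma rk_zero f S y : f y = 0 -> rk f (S :|: [set y]) = rk f S.
Proof. by move=> fy0; rewrite rk_U1 fy0 addsmx0. Qed.

Lemma rk_coloop f S S' y : S \subset S' ->
  ~~ (f y <= \sum_(x in S') <<f x>>)%MS ->
  rk f (S :|: [set y]) = (rk f S).+1.
Proof.
move=> sSS' nfy; rewrite rk_U1.
have fy0 : f y != 0 by apply: contraNneq nfy => ->; apply: sub0mx.
have := mxrank_sum_cap (\sum_(x in S) <<f x>>)%MS (f y).
rewrite rank_rV fy0.
set K := (_ :&: _)%MS.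
suff -> : \rank K = 0%N by rewrite addn0 addn1 /rk.
have sK : (K <= f y)%MS by apply: capmxSr.
have rK : (\rank K <= 1)%N by have := mxrankS sK; rewrite rank_rV fy0.
have eqK := (mxrank_leqif_eq sK).2; rewrite rank_rV fy0 in eqK.
move: rK; rewrite leq_eqVlt ltnS leqn0 => /orP[/eqP rK1|/eqP //].
move: eqK; rewrite rK1 eqxx => /esym eqK; case/negP: nfy.
apply: submx_trans (sums_mono _ sSS').
by apply: submx_trans (capmxSl (\sum_(x in S) <<f x>>)%MS (f y)); move/andP: eqK => [].
Qed.

Lemma rk_contract f g (Z : 'M[F]_n) S y :
  f y *m Z = 0 -> Z *m Z = Z -> (1%:M - Z <= f y)%MS -> f y != 0 ->
  (forall x, x \in S -> g x = f x *m Z) ->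
  rk f (S :|: [set y]) = (rk g S).+1.
Proof.
move=> eZ ZZ sZ e0 fg; rewrite rk_U1.
set U := (\sum_(x in S) <<f x>>)%MS; set e := f y.
have -> : rk g S = \rank (U *m Z).
  rewrite /rk (eq_bigr (fun x => <<f x *m Z>>%MS)); last by move=> x xS; rewrite fg.
  have E : ((\sum_(x in S) <<f x>>)%MS *m Z :=: \sum_(x in S) <<f x *m Z>>)%MS.
    refine (eqmx_trans (sumsmxMr _ _ _) _); apply: eqmx_sums => x _.
    refine (eqmx_trans (eqmxMr _ (genmxE _)) _). apply: eqmx_sym; apply: genmxE.
  by rewrite -E.1.
have eqUe : (U + e :=: U *m Z + e)%MS.
  have sUl : (U *m (1%:M - Z) <= e)%MS by apply: submx_trans (submxMl _ _) sZ.
  have dU : U = U *m Z + U *m (1%:M - Z) by rewrite mulmxBr mulmx1 addrC subrK.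
  have dUZ : U *m Z = U + - (U *m (1%:M - Z)) by rewrite mulmxBr mulmx1 opprB addrC subrK.
  apply/eqmxP/andP; split; rewrite addsmx_sub addsmxSr andbT.
    rewrite [X in (X <= _)%MS]dU.
    by apply: addmx_sub_adds => //; apply: submx_refl.
  rewrite [X in (X <= _)%MS]dUZ.
  apply: addmx_sub_adds; first exact: submx_refl.
  by rewrite (eqmx_opp (U *m (1%:M - Z))).
rewrite eqUe.1.
have := mxrank_sum_cap (U *m Z) e; rewrite rank_rV e0.
set K := (_ :&: _)%MS.
suff -> : \rank K = 0%N by rewrite addn0 addn1.
apply/eqP; rewrite mxrank_eq0.
have [D1 HD1] := submxP (capmxSl (U *m Z) e).
have [D2 HD2] := submxP (capmxSr (U *m Z) e).
move: HD1 HD2; rewrite -/K => HD1 HD2.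
have h1 : K *m Z = K by rewrite {1}HD1 -!mulmxA ZZ -HD1.
have h2 : K *m Z = 0 by rewrite HD2 -mulmxA eZ mulmx0.
by rewrite -h1 h2.
Qed.

End LA.

Definition b2F (b : bool) : 'F_2 := (b : nat)%:R.
Lemma b2F_add (a b : bool) : b2F (a (+) b) = b2F a + b2F b.
Proof. by case: a; case: b; apply/val_inj. Qed.
Lemma b2F_mul (a b : bool) : b2F (a && b) = b2F a * b2F b.
Proof. by case: a; case: b; apply/val_inj. Qed.
Lemma b2F_inj a b : b2F a = b2F b -> a = b.
Proof. by case: a; case: b => // /(congr1 val). Qed.
Lemma b2F0 : b2F false = 0. Proof. by []. Qed.
Lemma b2F1 : b2F true = 1. Proof. by apply/val_inj. Qed.
Lemma F2_cases (x : 'F_2) : x = b2F (x != 0).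
Proof. by apply/val_inj; case: x => [[|[|]]]. Qed.
Lemma F2_addss (x : 'F_2) : x + x = 0.
Proof. by rewrite [x]F2_cases -b2F_add addbb. Qed.

Section B.
Variable V : finType.
Local Notation n := #|V|.

Definition bvec (h : V -> bool) : 'rV['F_2]_n := \row_(j < n) b2F (h (enum_val j)).

Lemma bvec_eq h h' : (forall w, h w = h' w) -> bvec h = bvec h'.
Proof. by move=> E; apply/rowP => j; rewrite !mxE E. Qed.

Lemma bvec_entry h w : bvec h 0 (enum_rank w) = b2F (h w).
Proof. by rewrite mxE enum_rankK. Qed.

Lemma bvec0 h : (bvec h == 0) = [forall w, ~~ h w].
Proof.
apply/eqP/forallP => [E w | E].
  by move/rowP: E => /(_ (enum_rank w)); rewrite mxE enum_rankK !mxE; case: (h w).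
by apply/rowP => j; rewrite !mxE; move: (E (enum_val j)); case: (h _).
Qed.

Definition Pm (u : V) (a : V -> bool) : 'M['F_2]_n :=
  \matrix_(i, j) b2F ((i == j) (+) ((i == enum_rank u) && a (enum_val j))).

Lemma bvec_Pm h u a :
  bvec h *m Pm u a = bvec (fun w => h w (+) (h u && a w)).
Proof.
apply/rowP => j; rewrite !mxE.
rewrite (eq_bigr (fun i => b2F (h (enum_val i)) * b2F (i == j) +
   b2F (h (enum_val i)) * b2F ((i == enum_rank u) && a (enum_val j)))); last first.
  by move=> i _; rewrite !mxE b2F_add mulrDr.
rewrite big_split /= (bigD1 j) //= big1; last first.
  by move=> i /negPf nij; rewrite nij b2F0 mulr0.
rewrite eqxx b2F1 mulr1 addr0 (bigD1 (enum_rank u)) //= big1; last first.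
  by move=> i /negPf ni; rewrite ni b2F0 mulr0.
by rewrite eqxx /= enum_rankK addr0 b2F_add b2F_mul.
Qed.

Lemma Pm_unit u a : a u = false -> Pm u a \in unitmx.
Proof.
move=> au.
have E : Pm u a *m Pm u a = 1%:M.
  apply/row_matrixP => i; rewrite row_mul.
  have -> : row i (Pm u a) = bvec (fun w => (enum_rank w == i) (+) ((i == enum_rank u) && a w)).
    by apply/rowP => j; rewrite !mxE enum_valK (eq_sym j).
  rewrite bvec_Pm; apply/rowP => j; rewrite !mxE.
  by rewrite enum_valK au andbF addbF [enum_rank u == i]eq_sym -addbA addbb addbF eq_sym.
by case: (mulmx1_unit E).
Qed.

Definition Zm (v : V) : 'M['F_2]_n := diag_mx (bvec (fun w => w != v)).

Lemma bvec_Zm h v : bvec h *m Zm v = bvec (fun w => h w && (w != v)).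
Proof.
by rewrite /Zm mul_mx_diag; apply/rowP => j; rewrite !mxE b2F_mul.
Qed.

Lemma Zm_idem v : Zm v *m Zm v = Zm v.
Proof.
rewrite {1}/Zm mul_mx_diag; apply/matrixP => i j; rewrite !mxE.
case: (i =P j) => [->|]; last by rewrite mulr0n mul0r.
by rewrite mulr1n -b2F_mul andbb.
Qed.

Lemma Zm_e v : bvec (pred1 v) *m Zm v = 0.
Proof.
rewrite bvec_Zm; apply/eqP; rewrite bvec0; apply/forallP => w /=.
by case: (w == v).
Qed.

Lemma Zm_sub v : (1%:M - Zm v <= bvec (pred1 v))%MS.
Proof.
apply/row_subP => i; apply/sub_rVP.
exists (b2F (enum_val i == v)); apply/rowP => j; rewrite !mxE.
case: (i =P j) => [<-|nij].
  by rewrite /=; case: (enum_val i == v); apply/val_inj.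
case: (enum_val i =P v) => [eiv|_]; last by rewrite /b2F /= mulr0n subr0 mul0r.
case: (enum_val j =P v) => [ejv|nj]; last by rewrite /b2F /= mulr0n subr0 (introF eqP nj) mulr0.
by case: nij; apply: enum_val_inj; rewrite eiv ejv.
Qed.

End B.

Section G.
Variable V : finType.
Implicit Types (G : lgraph V) (u v w z : V).

Definition Ab G w z : bool :=
  [&& w \in verts G, z \in verts G & if w == z then loops G z else adj G w z].

Definition iasb G (x : V * 'I_3) w : bool :=
  let: (v, k) := x in
  match val k with
  | 0 => w == v
  | 1 => Ab G w v
  | _ => Ab G w v (+) (w == v)
  end.

Lemma ias_colE G x w : ias_col G x w = b2F (iasb G x w).
Proof. by case: x => v [[|[|k]] Hk] //=; rewrite b2F_add. Qed.

Definition vec G x := bvec (iasb G x).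

Lemma ias_rankE G S : ias_rank G S = rk (vec G) S.
Proof.
rewrite /ias_rank /rk.
set M := \matrix_(i, j) _.
have rowM : forall i, row i M = vec G (enum_val i).
  by move=> i; apply/rowP => j; rewrite !mxE ias_colE.
rewrite (big_enum_val (fun x => <<vec G x>>%MS)) /=.
apply: eqmx_rank; apply/andP; split.
  apply/row_subP => i; apply: (sumsmx_sup i) => //.
  by rewrite genmxE rowM.
apply/sumsmx_subP => i _; rewrite genmxE -rowM; apply: row_sub.
Qed.

End G.

Section G.
Variable V : finType.
Implicit Types (G : lgraph V) (u v w z : V).

Lemma nbr_verts G u w : lgraph_wf G -> nbr G u w -> (u \in verts G) && (w \in verts G).
Proof. by move=> [_ [Ha _]] /andP[_ /Ha]. Qed.

Lemma nbr_sym G u w : lgraph_wf G -> nbr G u w = nbr G w u.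
Proof. by move=> [_ [_ [Hs _]]]; rewrite /nbr eq_sym Hs. Qed.

Lemma nbr_irr G u : nbr G u u = false.
Proof. by rewrite /nbr eqxx. Qed.

Lemma Ab_sym G w z : lgraph_wf G -> Ab G w z = Ab G z w.
Proof.
move=> [_ [_ [Hs _]]]; rewrite /Ab.
case: (w =P z) => [->|nwz]; first by rewrite ?eqxx.

have nzw : z != w by apply/eqP => E; apply: nwz.
by rewrite (negPf nzw) Hs andbCA.
Qed.

Lemma AbU G w u : lgraph_wf G -> u \in verts G ->
  Ab G w u = nbr G u w (+) ((w == u) && loops G u).
Proof.
move=> [Hl [Ha [Hs Hi]]] uV; rewrite /Ab /nbr uV.
case: (w =P u) => [->|nwu]; first by rewrite eqxx /= uV.
have nuw : u != w by apply/eqP => E; apply: nwu.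
rewrite nuw /= addbF Hs.
by case E: (adj G u w); rewrite ?andbF //; move: (Ha _ _ E) => /andP[_ ->].
Qed.

Lemma Ab_ns G u w z : lgraph_wf G ->
  Ab (op_ns G u) w z = Ab G w z (+) (nbr G u w && nbr G u z).
Proof.
move=> wfG; rewrite /Ab /=.
case: (w =P z) => [<-|nwz].
  rewrite andbb; case N: (nbr G u w); last by rewrite !addbF.
  by have /andP[_ ->] := nbr_verts wfG N.
have nwz' : w != z by apply/eqP.
rewrite /=.
case Nw: (nbr G u w); case Nz: (nbr G u z); rewrite /= ?addbF //.
have /andP[_ ->] := nbr_verts wfG Nw.
by have /andP[_ ->] := nbr_verts wfG Nz.
Qed.

Lemma Ab_l G u w z : u \in verts G ->
  Ab (op_l G u) w z = Ab G w z (+) ((w == u) && (z == u)).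
Proof.
move=> uV; rewrite /Ab /=.
case: (w =P z) => [->|nwz] /=.
  by rewrite andbb; case: (z =P u) => [->|_]; rewrite ?uV ?addbF ?andbF.
case: (w =P u) => [Ew|]; case: (z =P u) => [Ez|] //=; rewrite ?addbF //.
by case: nwz; rewrite Ew Ez.
Qed.

Lemma Ab_del G v w z :
  Ab (op_del G v) w z = [&& Ab G w z, w != v & z != v].
Proof.
rewrite /Ab /= !inE.
case: (w =P z) => [->|nwz] /=.
  by case: (z != v); case: (z \in verts G); case: (loops G z).
by case: (w != v); case: (z != v); case: (w \in verts G); case: (z \in verts G);
  case: (adj G w z).
Qed.

Lemma wf_l G u : lgraph_wf G -> u \in verts G -> lgraph_wf (op_l G u).
Proof.
move=> [Hl [Ha [Hs Hi]]] uV; split => //=.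
by move=> w; case: (w =P u) => [->|_]; rewrite ?addbT ?addbF //; apply: Hl.
Qed.

Lemma wf_ns G u : lgraph_wf G -> lgraph_wf (op_ns G u).
Proof.
move=> wfG; have [Hl [Ha [Hs Hi]]] := wfG; split => /=.
  move=> w; case N: (nbr G u w); first by case/andP: (nbr_verts wfG N).
  by rewrite addbF; apply: Hl.
split.
  move=> w x; case A: (adj G w x); first by move=> _; apply: Ha.
  by move=> /= /and3P[_ /(nbr_verts wfG)/andP[_ ->] /(nbr_verts wfG)/andP[_ ->]].
split; last by move=> w; rewrite Hi eqxx.
by move=> w x; rewrite Hs eq_sym; congr (_ (+) _); case: (x != w) => //=; rewrite andbC.
Qed.

Lemma wf_del G v : lgraph_wf G -> lgraph_wf (op_del G v).
Proof.
move=> [Hl [Ha [Hs Hi]]]; split => /=.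
  by move=> w /andP[/Hl wV nv]; rewrite !inE nv.
split.
  by move=> w x /and3P[/Ha/andP[wV xV] nwv nxv]; rewrite !inE wV xV nwv nxv.
split => [w x|w]; last by rewrite Hi.
by rewrite Hs; case: (w != v); case: (x != v); rewrite ?andbF ?andbT.
Qed.

End G.

Definition i0 : 'I_3 := @Ordinal 3 0 isT.
Definition i1 : 'I_3 := @Ordinal 3 1 isT.
Definition i2 : 'I_3 := @Ordinal 3 2 isT.
Definition swp (a b k : 'I_3) : 'I_3 := if k == a then b else if k == b then a else k.
Lemma swpK a b : involutive (swp a b).
Proof.
move=> k; rewrite /swp.
case: (k =P a) => [->|nka]; first by rewrite eqxx; case: (b =P a) => [->|].
case: (k =P b) => [->|nkb]; first by rewrite eqxx.
by rewrite (introF eqP nka) (introF eqP nkb).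
Qed.
Lemma swp_inj a b : injective (swp a b).
Proof. exact: inv_inj (swpK a b). Qed.

Section G.
Variable V : finType.
Implicit Types (G : lgraph V) (u v w z : V).

Definition pi_ns G u z (k : 'I_3) : 'I_3 :=
  if z == u then (if loops G u then swp i0 i1 k else swp i0 i2 k) else k.
Definition pi_l u z (k : 'I_3) : 'I_3 := if z == u then swp i1 i2 k else k.

Lemma pi_ns_inj G u z : injective (pi_ns G u z).
Proof.
rewrite /pi_ns; case: (z == u); last by [].
by case: (loops G u); apply: swp_inj.
Qed.
Lemma pi_l_inj u z : injective (pi_l u z).
Proof. by rewrite /pi_l; case: (z == u); [apply: swp_inj|]. Qed.

Lemma Abuz G u z : lgraph_wf G -> u \in verts G -> u != z -> Ab G u z = nbr G u z.
Proof.
move=> wfG uV nuz; rewrite Ab_sym // AbU //.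
by rewrite eq_sym (negPf nuz) /= addbF.
Qed.

Lemma vec_ns G u z k : lgraph_wf G -> u \in verts G ->
  vec (op_ns G u) (z, pi_ns G u z k) = vec G (z, k) *m Pm u (nbr G u).
Proof.
move=> wfG uV; rewrite /vec bvec_Pm; apply: bvec_eq => w.
rewrite /pi_ns; case: (z =P u) => [->|nzu].
  have Auu : Ab G u u = loops G u by rewrite AbU // nbr_irr eqxx.
  rewrite /iasb !Ab_ns // !AbU // nbr_irr !andbF !addbF eqxx.
  case: (nbr G u w); case: (w == u); case: (loops G u);
  by case: k => [[|[|[|]]] Hk].
have nuz : u != z by apply/eqP => E; apply: nzu.
rewrite /iasb !Ab_ns // (Abuz wfG uV nuz) (negPf nuz).
case: k => [[|[|[|]]] Hk] //=; rewrite ?andbF ?addbF // andbC //.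
by rewrite addbAC.
Qed.

Lemma vec_l G u z k : u \in verts G ->
  vec (op_l G u) (z, pi_l u z k) = vec G (z, k) *m 1%:M.
Proof.
move=> uV; rewrite mulmx1 /vec; apply: bvec_eq => w.
rewrite /pi_l; case: (z =P u) => [->|nzu].
  rewrite /iasb !Ab_l // eqxx andbT.
  by case: k => [[|[|[|]]] Hk] //=; case: (Ab G w u); case: (w == u).
by rewrite /iasb !Ab_l // (introF eqP nzu) andbF addbF.
Qed.

Lemma vec_del G v z k : z != v ->
  vec (op_del G v) (z, k) = vec G (z, k) *m Zm v.
Proof.
move=> nzv; rewrite /vec bvec_Zm; apply: bvec_eq => w.
rewrite /iasb !Ab_del nzv andbT.
case: k => [[|[|[|]]] Hk] //=.
- by case: (w =P z) => [->|]; rewrite ?nzv.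
- case: (w =P z) => [->|_]; rewrite ?nzv ?andbT ?addbF //.
Qed.

End G.

Section G.
Variable V : finType.
Implicit Types (G H K : lgraph V) (u v w z : V).

Lemma vm_trans2 G H K : vertex_minor G H -> vertex_minor H K -> vertex_minor G K.
Proof.
move=> GH; elim=> [//|K1 K2 _ IH st].
exact: vm_trans IH st.
Qed.

Lemma vm_one G H : vm_step G H -> vertex_minor G H.
Proof. by move=> st; apply: vm_trans (vm_refl G) st. Qed.

Definition RelP G G' (pi : V -> 'I_3 -> 'I_3) := exists P : 'M['F_2]_#|V|,
  [/\ forall z, injective (pi z), P \in unitmx,
      forall z k, vec G' (z, pi z k) = vec G (z, k) *m P,
      vertex_minor G G' & lgraph_wf G' /\ verts G' = verts G].

Lemma RelP_refl G : lgraph_wf G -> RelP G G (fun _ k => k).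
Proof.
move=> wfG; exists 1%:M; split => //; first by move=> z x y.
  exact: unitmx1.
  by move=> z k; rewrite mulmx1.
exact: vm_refl.
Qed.

Lemma RelP_trans G G1 G2 pi1 pi2 : RelP G G1 pi1 -> RelP G1 G2 pi2 ->
  RelP G G2 (fun z k => pi2 z (pi1 z k)).
Proof.
move=> [P1 [i1 u1 e1 v1 [w1 V1]]] [P2 [i2 u2 e2 v2 [w2 V2]]].
exists (P1 *m P2); split.
- by move=> z x y /i2 /i1.
- by rewrite unitmx_mul u1 u2.
- by move=> z k; rewrite e2 e1 mulmxA.
- exact: vm_trans2 v1 v2.
- by split; rewrite // V2 V1.
Qed.

Lemma RelP_ns G u : lgraph_wf G -> u \in verts G -> RelP G (op_ns G u) (pi_ns G u).
Proof.
move=> wfG uV; exists (Pm u (nbr G u)); split.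
- exact: pi_ns_inj.
- by apply: Pm_unit; apply: nbr_irr.
- by move=> z k; apply: vec_ns.
- by apply: vm_one; exists u => //; apply: Or43.
- by split => //; apply: wf_ns.
Qed.

Lemma RelP_l G u : lgraph_wf G -> u \in verts G -> RelP G (op_l G u) (pi_l u).
Proof.
move=> wfG uV; exists 1%:M; split.
- exact: pi_l_inj.
- exact: unitmx1.
- by move=> z k; apply: vec_l.
- by apply: vm_one; exists u => //; apply: Or41.
- by split => //; apply: wf_l.
Qed.

Lemma bring1 G v k : lgraph_wf G -> v \in verts G ->
  [|| k == i0, (k == i1) && loops G v | (k == i2) && ~~ loops G v] ->
  exists G' pi, RelP G G' pi /\ pi v k = i0.
Proof.
move=> wfG vV /or3P[/eqP->| /andP[/eqP-> L] | /andP[/eqP-> /negPf L]].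
- by exists G, (fun _ k => k); split => //; apply: RelP_refl.
- exists (op_ns G v), (pi_ns G v); split; first exact: RelP_ns.
  by rewrite /pi_ns eqxx L; apply: val_inj.
- exists (op_ns G v), (pi_ns G v); split; first exact: RelP_ns.
  by rewrite /pi_ns eqxx L; apply: val_inj.
Qed.

Lemma bring G v k : lgraph_wf G -> v \in verts G -> vec G (v, k) != 0 ->
  exists G' pi, RelP G G' pi /\ pi v k = i0.
Proof.
move=> wfG vV nz.
case C: [|| k == i0, (k == i1) && loops G v | (k == i2) && ~~ loops G v].
  exact: bring1.
have Ev : vec G (v, k) = bvec (nbr G v).
  clear nz; rewrite /vec; apply: bvec_eq => w; rewrite /iasb AbU //.
  move: C; case: k => [[|[|[|]]] Hk] //=; rewrite /i0 /i1 /i2 /eq_op /=;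
    case: (loops G v) => //= _; rewrite ?andbF ?addbF ?andbT //.
  by rewrite -addbA addbb addbF.
move: nz; rewrite Ev bvec0 => /forallPn[w /negbNE Nw].
have [_ wV] := andP (nbr_verts wfG Nw).
have nvw : v != w by case/andP: Nw.
have R1 := RelP_ns wfG wV.
have [_ [_ _ _ _ [wf1 V1]]] := R1.
have C1 : [|| k == i0, (k == i1) && loops (op_ns G w) v
            | (k == i2) && ~~ loops (op_ns G w) v].
  clear Ev R1; rewrite /= nbr_sym // Nw addbT negbK.
  move: C; case: k => [[|[|[|]]] Hk] //=; rewrite /i0 /i1 /i2 /eq_op /=;
    by case: (loops G v).
have vV1 : v \in verts (op_ns G w) by [].
have [G2 [pi2 [R2 E2]]] := bring1 wf1 vV1 C1.
exists G2, (fun z k => pi2 z (pi_ns G w z k)); split.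
  exact: RelP_trans R1 R2.
by rewrite /pi_ns (negPf nvw).
Qed.

End G.

Section G.
Variable V : finType.
Implicit Types (G H K : lgraph V) (u v w : V).

Lemma tr_in G T a : gtransversal G T -> a \in T -> a.1 \in verts G.
Proof. by move=> [sT _] /(subsetP sT); rewrite inE. Qed.

Lemma tr_uniq G T a b : gtransversal G T -> a \in T -> b \in T -> a.1 = b.1 -> a = b.
Proof.
move=> trT aT bT Eab; have aV := tr_in trT aT.
have [_ C] := trT; have [k Ek] := cards1P (introT eqP (C _ aV)).
have ha : a.2 \in [set k | (a.1, k) \in T] by rewrite inE -surjective_pairing.
have hb : b.2 \in [set k | (a.1, k) \in T] by rewrite inE Eab -surjective_pairing.
rewrite Ek !inE in ha hb.
by rewrite [a]surjective_pairing [b]surjective_pairing Eab (eqP ha) (eqP hb).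
Qed.

Definition colF G (x : V * 'I_3) w : 'F_2 := b2F (iasb G x w).
Definition alp (k : 'I_3) : 'F_2 := b2F (val k != 1%N).
Definition bet (k : 'I_3) : 'F_2 := b2F (val k != 0%N).

Lemma colF_dec G u k w :
  colF G (u, k) w = alp k * b2F (w == u) + bet k * b2F (Ab G w u).
Proof.
rewrite /colF /alp /bet /iasb.
case: k => [[|[|[|]]] Hk] //=; rewrite ?b2F1 ?b2F0 ?mul1r ?mul0r ?addr0 ?add0r //.
by rewrite b2F_add addrC.
Qed.

Lemma entry_sum G (h : V -> bool) (S : {set V * 'I_3}) (lam : V * 'I_3 -> 'M['F_2]_(1,1)) :
  bvec h = \sum_(z in S) lam z *m vec G z ->
  forall w, b2F (h w) = \sum_(z in S) lam z 0 0 * colF G z w.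
Proof.
move=> E w; rewrite -(bvec_entry h w) E summxE.
apply: eq_bigr => z _; rewrite !mxE big_ord1.
by rewrite /vec bvec_entry.
Qed.

Lemma isotropy G T x : lgraph_wf G -> gtransversal G T -> x \in T ->
  ~~ ((vec G (x.1, i0) <= \sum_(z in T :\ x) <<vec G z>>)%MS &&
      (vec G (x.1, i1) <= \sum_(z in T :\ x) <<vec G z>>)%MS).
Proof.
move=> wfG trT xT; set v := x.1; set S := T :\ x.
have vV : v \in verts G by apply: tr_in trT xT.
have Sv : forall z : V * 'I_3, z \in S -> z.1 != v.
  move=> z; rewrite !inE => /andP[nzx zT]; apply/eqP => E.
  by case/eqP: nzx; apply: tr_uniq trT zT xT E.
apply/negP => /andP[/sub_sums_genmxP[lam E1] /sub_sums_genmxP[mu E2]].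
have H1 := entry_sum E1; have H2 := entry_sum E2.
set l := fun z => lam z 0 0 in H1; set m := fun z => mu z 0 0 in H2.
pose Q := \sum_(z in S) \sum_(z' in S)
   (l z * m z' * (bet z'.2 * colF G z z'.1 + bet z.2 * colF G z' z.1)).
have Q0 : Q = 0.
  apply: big1 => z zS; apply: big1 => z' z'S.
  case: (z.1 =P z'.1) => [E|NE].
    have zz : z = z'.
      by apply: tr_uniq trT _ _ E; [move: zS|move: z'S]; rewrite inE => /andP[].
    by rewrite -zz F2_addss mulr0.
  rewrite [z]surjective_pairing [z']surjective_pairing !colF_dec /=.
  have -> : (z'.1 == z.1) = false by apply/eqP => E; apply: NE.
  rewrite (introF eqP NE) b2F0 (Ab_sym _ z.1) //.
  set A := b2F (Ab G z.1 z'.1); set a1 := alp _; set a2 := alp _.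
  set b1 := bet z.2; set b2 := bet z'.2.
  have -> : b2 * (a1 * 0 + b1 * A) + b1 * (a2 * 0 + b2 * A) = b1 * b2 * A + b1 * b2 * A.
    by ring.
  by rewrite F2_addss mulr0.
have Q1 : Q = 1.
  rewrite /Q.
  rewrite (eq_bigr (fun z => \sum_(z' in S) (l z * m z' * (bet z'.2 * colF G z z'.1)) +
      \sum_(z' in S) (l z * m z' * (bet z.2 * colF G z' z.1)))); last first.
    by move=> z _; rewrite -big_split /=; apply: eq_bigr => z' _; rewrite mulrDr.
  rewrite big_split /= exchange_big /=.
  rewrite big1 ?add0r; last first.
    move=> z' z'S.
    rewrite (eq_bigr (fun z => m z' * bet z'.2 * (l z * colF G z z'.1))); last first.
      by move=> z _; ring.
    by rewrite -mulr_sumr -H1 /= (negPf (Sv _ z'S)) b2F0 mulr0.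
  have one : (1 : 'F_2) = b2F (iasb G (v, i0) v) by rewrite /= eqxx b2F1.
  rewrite one H1; apply: eq_bigr => z zS.
  rewrite (eq_bigr (fun z' => l z * bet z.2 * (m z' * colF G z' z.1))); last first.
    by move=> z' _; ring.
  rewrite -mulr_sumr -H2 /=.
  rewrite [z in colF G z v]surjective_pairing colF_dec (Ab_sym _ v) //.
  have -> : (v == z.1) = false by apply/eqP => E; move: (Sv _ zS); rewrite E eqxx.
  by rewrite b2F0 /l; ring.
by have := Q0; rewrite Q1 => /eqP; rewrite oner_eq0.
Qed.

End G.

Section G.
Variable V : finType.
Implicit Types (G H K : lgraph V) (u v w : V).
Notation X := (V * 'I_3)%type.

Lemma vec_phi G v : vec G (v, i0) = bvec (pred1 v).
Proof. by apply: bvec_eq. Qed.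

Lemma imsetD_inj (s : X -> X) (A B : {set X}) : injective s ->
  s @: (A :\: B) = s @: A :\: s @: B.
Proof.
move=> inj; apply/setP => b; rewrite !inE.
apply/imsetP/andP => [[a] | [nb /imsetP[a aA Eb]]].
  by rewrite inE => /andP[naB aA] ->; rewrite !mem_imset // naB.
by exists a; rewrite // inE aA andbT; apply: contra nb => aB; rewrite Eb imset_f.
Qed.

Lemma step G T x y : lgraph_wf G -> gtransversal G T -> x \in T ->
  y.1 = x.1 -> vec G y != 0 ->
  exists H (s : X -> X), [/\ vertex_minor G H, lgraph_wf H, injective s,
    gtransversal H (s @: (T :\ x)) &
    forall A : {set X}, A \subset T :\ x ->
      ias_rank H (s @: A) = (ias_rank G (A :|: [set y])).-1].
Proof.
move=> wfG trT xT yx ny.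
set v := x.1.
have vV : v \in verts G by apply: tr_in trT xT.
have Sv : forall z : X, z \in T :\ x -> z.1 != v.
  move=> z; rewrite !inE => /andP[nzx zT]; apply/eqP => E.
  by case/eqP: nzx; apply: tr_uniq trT zT xT E.
have Ey : y = (v, y.2) by rewrite {1}[y]surjective_pairing yx.
rewrite Ey in ny.
have [G' [pi [[P [inj uP eP vm [wf' V']]] piy]]] := bring wfG vV ny.
pose s := fun a : X => (a.1, pi a.1 a.2).
have inj_s : injective s.
  move=> a b [E1 E2]; rewrite [a]surjective_pairing [b]surjective_pairing.
  by rewrite -E1 in E2 *; rewrite (inj _ _ _ E2).
have vV' : v \in verts G' by rewrite V'.
exists (op_del G' v), s; split.
- by apply: vm_trans vm _; exists v => //; apply: Or44.
- exact: wf_del.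
- exact: inj_s.
- split.
    apply/subsetP => b /imsetP[a aS ->]; rewrite inE /= !inE V' (Sv _ aS) /=.
    by apply: tr_in trT _; move: aS; rewrite inE => /andP[].
  move=> u; rewrite /= !inE => /andP[nuv uV'].
  have -> : [set k | (u, k) \in s @: (T :\ x)] = pi u @: [set k | (u, k) \in T].
    apply/setP => k; rewrite !inE; apply/imsetP/imsetP.
      move=> [a aS [Eu Ek]]; exists a.2; first by rewrite inE Eu -surjective_pairing;
        move: aS; rewrite inE => /andP[].
      by rewrite Ek Eu.
    move=> [k0]; rewrite inE => uk0T ->; exists (u, k0) => //.
    rewrite !inE uk0T andbT; apply/eqP => E; move: nuv; rewrite /v -E eqxx.
    by [].
  rewrite card_imset; last exact: inj.
  by have [_ C] := trT; apply: C; rewrite -V'.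
- move=> A sA.
  rewrite !ias_rankE.
  have sy : s y = (v, i0) by rewrite Ey /s /= piy.
  have Ht : forall a, vec G' (s a) = vec G a *m P.
    by move=> a; rewrite /s eP -surjective_pairing.
  rewrite -(rk_transport (A :|: [set y]) uP inj_s Ht) imsetU imset_set1 sy.
  rewrite (@rk_contract _ _ _ (vec G') (vec (op_del G' v)) (Zm v)) //.
  + by rewrite vec_phi Zm_e.
  + exact: Zm_idem.
  + by rewrite vec_phi; apply: Zm_sub.
  + rewrite vec_phi bvec0; apply/forallPn; exists v; by rewrite /= eqxx.
  + move=> b /imsetP[a aA ->]; rewrite [s a]surjective_pairing vec_del //=.
    by apply: Sv; apply: (subsetP sA).
Qed.

End G.

Section G.
Variable V : finType.
Implicit Types (G H K : lgraph V) (u v w : V).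
Notation X := (V * 'I_3)%type.

Lemma step_del G T x : lgraph_wf G -> gtransversal G T -> x \in T ->
  exists H (s : X -> X), [/\ vertex_minor G H, lgraph_wf H, injective s,
    gtransversal H (s @: (T :\ x)) &
    forall A : {set X}, A \subset T :\ x -> ias_rank H (s @: A) = ias_rank G A].
Proof.
move=> wfG trT xT.
have iso := isotropy wfG trT xT.
have [y [yx ny]] : exists y : X, y.1 = x.1 /\
    ~~ (vec G y <= \sum_(z in T :\ x) <<vec G z>>)%MS.
  case E: (vec G (x.1, i0) <= \sum_(z in T :\ x) <<vec G z>>)%MS.
    by exists (x.1, i1); split => //; rewrite E in iso.
  by exists (x.1, i0); rewrite E.
have nz : vec G y != 0 by apply: contraNneq ny => ->; apply: sub0mx.
have [H [s [vm wfH inj trH R]]] := step wfG trT xT yx nz.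
exists H, s; split => // A sA.
by rewrite R // !ias_rankE (rk_coloop sA ny).
Qed.

Lemma step_con G T x : lgraph_wf G -> gtransversal G T -> x \in T ->
  exists H (s : X -> X), [/\ vertex_minor G H, lgraph_wf H, injective s,
    gtransversal H (s @: (T :\ x)) &
    forall A : {set X}, A \subset T :\ x ->
      ias_rank H (s @: A) = (ias_rank G (A :|: [set x]) - ias_rank G [set x])%N].
Proof.
move=> wfG trT xT.
case: (eqVneq (vec G x) 0) => [z|nz].
  have [H [s [vm wfH inj trH R]]] := step_del wfG trT xT.
  exists H, s; split => // A sA.
  by rewrite R // !ias_rankE rk_zero // rk_set1 z eqxx subn0.
have [H [s [vm wfH inj trH R]]] := step wfG trT xT (erefl x.1) nz.
exists H, s; split => // A sA.
by rewrite R // [ias_rank G [set x]]ias_rankE rk_set1 nz subn1.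
Qed.

End G.

Section G.
Variable V : finType.
Implicit Types (G H K : lgraph V) (u v w : V).
Notation X := (V * 'I_3)%type.

Lemma rank_mono G (A B : {set X}) : A \subset B -> (ias_rank G A <= ias_rank G B)%N.
Proof. by move=> sAB; rewrite !ias_rankE; apply: rk_mono. Qed.

Lemma main_ind n : forall G T (C D : {set X}), #|C :|: D| = n ->
  lgraph_wf G -> gtransversal G T -> C \subset T -> D \subset T -> [disjoint C & D] ->
  exists H (f : X -> X), [/\ vertex_minor G H,
    gtransversal H (f @: (T :\: (C :|: D))),
    {in T :\: (C :|: D) &, injective f} &
    forall A : {set X}, A \subset T :\: (C :|: D) ->
      ias_rank H (f @: A) = (ias_rank G (A :|: C) - ias_rank G C)%N].
Proof.
elim: n => [|n IH] G T C D cCD wfG trT sC sD dCD.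
  have /eqP := cards0_eq cCD; rewrite setU_eq0 => /andP[/eqP C0 /eqP D0].
  subst C D; exists G, (fun a => a); rewrite setU0 setD0 imset_id; split => //.
  - exact: vm_refl.
  - by move=> A _; rewrite imset_id setU0 [ias_rank G set0]ias_rankE rk_set0 subn0.
have [x xCD] : exists x, x \in C :|: D.
  by apply/set0Pn; rewrite -card_gt0 cCD.
have xT : x \in T by move: xCD; rewrite inE => /orP[/(subsetP sC)|/(subsetP sD)].
have core : exists H1 (s : X -> X), [/\ vertex_minor G H1, lgraph_wf H1, injective s,
    gtransversal H1 (s @: (T :\ x)) &
    forall A : {set X}, A \subset T :\: (C :|: D) ->
      (ias_rank H1 (s @: (A :|: (C :\ x))) - ias_rank H1 (s @: (C :\ x)))%N =
      (ias_rank G (A :|: C) - ias_rank G C)%N].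
  have sCx : C :\ x \subset T :\ x by apply: setSD.
  have sAx : forall A : {set X}, A \subset T :\: (C :|: D) -> A \subset T :\ x.
    move=> A sA; apply/subsetP => a aA; move: (subsetP sA a aA).
    rewrite !inE => /andP[naCD aT]; rewrite aT andbT.
    by apply/eqP => E; move: naCD; rewrite E; move: xCD; rewrite inE => ->.
  move: xCD; rewrite inE => /orP[xC|xD].
    have [H1 [s [vm wf1 inj tr1 R]]] := step_con wfG trT xT.
    exists H1, s; split => // A sA.
    have sAC : A :|: (C :\ x) \subset T :\ x by rewrite subUset sAx.
    rewrite !R //.
    have E1 : A :|: (C :\ x) :|: [set x] = A :|: C.
      by rewrite -setUA [_ :|: [set x]]setUC -/(x |: (C :\ x)) setD1K.
    have E2 : C :\ x :|: [set x] = C by rewrite setUC -/(x |: (C :\ x)) setD1K.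
    rewrite E1 E2.
    have l1 : (ias_rank G [set x] <= ias_rank G C)%N by apply: rank_mono; rewrite sub1set.
    have l2 : (ias_rank G C <= ias_rank G (A :|: C))%N by apply: rank_mono; apply: subsetUr.
    lia.
  have xnC : x \notin C.
    by apply: contraTN dCD => xC; apply/pred0Pn; exists x; rewrite /= xC.
  have ECx : C :\ x = C by apply/setDidPl; rewrite disjoint_sym disjoints1.
  have [H1 [s [vm wf1 inj tr1 R]]] := step_del wfG trT xT.
  exists H1, s; split => // A sA.
  have sC2 : C \subset T :\ x by rewrite -{1}ECx.
  by rewrite ECx !R // subUset sAx.
have [H1 [s [vm1 wf1 inj tr1 R1]]] := core.
set C1 := s @: (C :\ x); set D1 := s @: (D :\ x).
have EU : C1 :|: D1 = s @: ((C :|: D) :\ x) by rewrite setDUl imsetU.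
have cCD1 : #|C1 :|: D1| = n.
  rewrite EU card_imset //; move: cCD; rewrite (cardsD1 x) xCD.
  by rewrite add1n => [[]].
have sC1 : C1 \subset s @: (T :\ x) by apply: imsetS; apply: setSD.
have sD1 : D1 \subset s @: (T :\ x) by apply: imsetS; apply: setSD.
have dCD1 : [disjoint C1 & D1].
  rewrite -setI_eq0 -imsetI; last by move=> a b _ _; apply: inj.
  apply/eqP/setP => b; rewrite inE; apply/negbTE/negP => /imsetP[a].
  rewrite !inE => /andP[/andP[_ aC] /andP[_ aD]] _.
  by move: dCD => /pred0P /(_ a); rewrite /= aC aD.
have [H [f1 [vm2 tr2 inj2 R2]]] := IH _ _ _ _ cCD1 wf1 tr1 sC1 sD1 dCD1.
have KEY : s @: (T :\ x) :\: (C1 :|: D1) = s @: (T :\: (C :|: D)).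
  have E : (T :\ x) :\: ((C :|: D) :\ x) = T :\: (C :|: D).
    apply/setP => a; rewrite !inE.
    case: (a =P x) => [->|_] //=; by move: xCD; rewrite inE => ->.
  by rewrite EU -imsetD_inj // E.
exists H, (fun a => f1 (s a)); split.
- exact: vm_trans2 vm1 vm2.
- by rewrite (imset_comp f1 s) -KEY.
- move=> a b aT bT /= E; apply: inj.
  by apply: inj2 E; rewrite KEY; apply: imset_f.
- move=> A sA.
  rewrite (imset_comp f1 s) R2; last by rewrite KEY; apply: imsetS.
  by rewrite -imsetU R1.
Qed.

End G.

Local Close Scope ring_scope.

Theorem proposition8p4 (V : finType) (G : lgraph V) (T : {set V * 'I_3}) :
  lgraph_wf G -> gtransversal G T ->
  forall C D : {set V * 'I_3},
    C \subset T -> D \subset T -> [disjoint C & D] ->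
    exists (H : lgraph V) (T' : {set V * 'I_3}),
      vertex_minor G H /\ gtransversal H T' /\
      miso (mminor (tmatroid G T) C D) (tmatroid H T').
Proof.
move=> wfG trT C D sC sD dCD.
have [H [f [vm tr inj R]]] := main_ind (erefl #|C :|: D|) wfG trT sC sD dCD.
exists H, (f @: (T :\: (C :|: D))); split => //; split => //.
exists f; split => //=; split => // S sS; exact: R.
Qed.
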